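(* Let $0\le k\le n$ and let quadratic-form data be given: $h\in\mathbb F_2^n$, linearly independent $v_1,\dots,v_k\in\mathbb F_2^n$, $d\in\mathbb F_2^k$, an upper-triangular $J\in\mathbb F_2^{k\times k}$, and a nonzero $\gamma\in\mathbb C$. Run the following procedure. Set $a_t=d_t+2J_{tt}\in\mathbb Z_4$ and let $B\in\mathbb F_2^{k\times k}$ be the symmetric zero-diagonal matrix with $B_{ij}=J_{ij}$ for $i<j$, $B_{ij}=J_{ji}$ for $i>j$. Create tables $A,V,C$ of length $2^k$ initialized to $0$ and set $A[2^{t-1}]=a_t$, $V[2^{t-1}]=v_t$, $C[2^{t-1}]=$ the $t$-th column of $B$ ($t=1,\dots,k$). Initialize a complex array $\psi$ of length $2^n$ to zero, set $y\gets 0\in\mathbb F_2^k$, $x\gets h$, $p\gets 0\in\mathbb F_2^k$, $q\gets 0\in\mathbb Z_4$, and $\psi_x\gets\gamma$. For $m=1,\dots,2^k-1$: let $f\gets m\,\&\,(-m)$; if $(y\,\&\,f)=0$ set $q\gets q+A[f]+2\cdot\mathbf 1[(p\,\&\,f)\neq 0]\pmod 4$, otherwise set $q\gets q-A[f]+2\cdot\mathbf 1[(p\,\&\,f)\neq 0]\pmod 4$; then set $y\gets y\oplus f$, $x\gets x\oplus V[f]$, $p\gets p\oplus C[f]$, and $\psi_x\gets\gamma\,\mathrm i^{q}$. Return $\psi$. Then the returned array is exactly the amplitude vector $(\psi_x)_{x\in\mathbb F_2^n}$ with \[ \psi_{h\oplus\sum_{t=1}^k y_t v_t}=\gamma\,\mathrm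 i^{d^\top y}(-1)^{y^\top J y}\quad\text{for all } y\in\mathbb F_2^k, \] and $\psi_x=0$ for all $x\notin h+\operatorname{span}\{v_1,\dots,v_k\}$.
   Context: $\mathbb F_2=\{0,1\}$, $\oplus$ is XOR. A $k$-bit vector $y\in\mathbb F_2^k$ is encoded as the integer $\sum_{t=1}^k y_t 2^{t-1}$ (coordinate $t$ is the bit of value $2^{t-1}$); similarly for $n$-bit vectors, which index the array $\psi$. $\&$ is bitwise AND on these integers, $-m$ is two's-complement negation so that $m\,\&\,(-m)$ is the lowest set bit of $m$, and $\mathbf 1[\cdot]$ is the indicator. In the exponents $d^\top y$ and $y^\top Jy$, bits are treated as integers with ordinary integer products; $\mathrm i^{q}$ depends only on $q$ mod $4$. This data (a quadratic-form description) describes an $n$-qubit stabilizer state with support the affine space $h+\operatorname{span}\{v_1,\dots,v_k\}$. *)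

(* Defs.v *)
From HB Require Import structures.
From mathcomp Require Import all_boot all_order all_algebra.
From Stdlib Require ZArith.
Set Implicit Arguments. Unset Strict Implicit. Unset Printing Implicit Defensive.
Import Order.TTheory GRing.Theory Num.Theory.
Local Open Scope ring_scope.

Definition bitv (b : 'F_2) : nat := val b.

(* encoding of a vector in F_2^n as the integer sum_t y_t 2^(t-1)
   (coordinate t, 1-indexed, is the bit of value 2^(t-1); here t is 0-indexed) *)
Definition enc (n : nat) (y : 'rV['F_2]_n) : nat :=
  (\sum_(t < n) bitv (y ord0 t) * 2 ^ t)%N.

Definition tbl (T : Type) (k : nat) (dflt : T) (g : 'I_k -> T) (j : nat) : T :=
  match [pick t : 'I_k | j == (2 ^ t)%N] with Some t => g t | None => dflt end.

Definition lowbit (m : nat) : nat :=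
  BinInt.Z.to_nat (BinInt.Z.land (BinInt.Z.of_nat m) (BinInt.Z.opp (BinInt.Z.of_nat m))).

Definition symB (k : nat) (J : 'M['F_2]_k) : 'M['F_2]_k :=
  \matrix_(i, j) (if (i < j)%N then J i j else if (j < i)%N then J j i else 0).

Section Alg.
Variables (C : numClosedFieldType) (n k : nat) (h : 'rV['F_2]_n)
  (Vm : 'M['F_2]_(k, n)) (d : 'rV['F_2]_k) (J : 'M['F_2]_k) (gamma : C).

Definition tabA : nat -> 'Z_4 :=
  tbl 0 (fun t : 'I_k => ((bitv (d ord0 t) + 2 * bitv (J t t))%N)%:R).
Definition tabV : nat -> nat := tbl 0%N (fun t : 'I_k => enc (row t Vm)).
Definition tabC : nat -> nat :=
  tbl 0%N (fun t : 'I_k => enc (\row_i (symB J) i t)).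

Record state := St { st_y : nat; st_x : nat; st_p : nat; st_q : 'Z_4;
                     st_psi : nat -> C }.

Definition upd (psi : nat -> C) (x : nat) (v : C) : nat -> C :=
  fun z => if z == x then v else psi z.

Definition step (s : state) (m : nat) : state :=
  let f := lowbit m in
  let ind : 'Z_4 := (2 * (Nat.land (st_p s) f != 0%N))%N%:R in
  let q' := if Nat.land (st_y s) f == 0%N then st_q s + tabA f + ind
            else st_q s - tabA f + ind in
  let y' := Nat.lxor (st_y s) f in
  let x' := Nat.lxor (st_x s) (tabV f) in
  let p' := Nat.lxor (st_p s) (tabC f) in
  St y' x' p' q' (upd (st_psi s) x' (gamma * 'i ^+ (val q'))).

Definition init : state :=
  St 0 (enc h) 0 0 (upd (fun _ => 0) (enc h) gamma).

(* the returned array psi, indexed by the integer encodings of F_2^n *)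
Definition procedure : nat -> C :=
  st_psi (foldl step init (iota 1 (2 ^ k - 1))).
End Alg.

(* Main.v *)
Require Import Defs.
From HB Require Import structures.
From mathcomp Require Import all_boot all_order all_algebra zify ring.
From Stdlib Require ZArith Lia.
Import Order.TTheory GRing.Theory Num.Theory.
Set Implicit Arguments. Unset Strict Implicit. Unset Printing Implicit Defensive.
Module ZL.
Import ZArith Lia.
Local Open Scope Z_scope.
Lemma land_double a : Z.land (2*a) (-(2*a)) = 2 * Z.land a (-a).
Proof.
apply Z.bits_inj' => n Hn.
have E : -(2*a) = Z.double (-a) by rewrite Z.double_spec; lia.
rewrite E -!Z.double_spec Z.land_spec !Z.double_bits Z.land_spec //.
Qed.
Lemma land_odd c : Z.land (2*c+1) (-(2*c+1)) = 1.
Proof.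
apply Z.bits_inj' => n Hn.
have E : -(2*c+1) = 2 * (Z.lnot c) + 1 by rewrite Z.lnot_eq_pred_opp; lia.
rewrite E Z.land_spec.
case: (Z.eq_dec n 0) => [->|Hn0].
  by rewrite !Z.testbit_odd_0.
have -> : n = Z.succ (Z.pred n) by lia.
have Hp : 0 <= Z.pred n by lia.
rewrite !Z.testbit_odd_succ // Z.lnot_spec //.
have -> : 1 = 2*0+1 by [].
rewrite Z.testbit_odd_succ // Z.bits_0.
by case: (Z.testbit c _).
Qed.
Lemma lowbit_double m : lowbit (Nat.mul 2 m) = Nat.mul 2 (lowbit m).
Proof.
rewrite /lowbit Nat2Z.inj_mul; change (Z.of_nat 2) with 2; rewrite land_double.
have : 0 <= Z.land (Z.of_nat m) (- Z.of_nat m) by apply Z.land_nonneg; left; lia.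
move: (Z.land _ _) => z Hz. lia.
Qed.
Lemma lowbit_odd c : lowbit (Nat.add (Nat.mul 2 c) 1) = 1%nat.
Proof.
rewrite /lowbit Nat2Z.inj_add Nat2Z.inj_mul; change (Z.of_nat 2) with 2; change (Z.of_nat 1) with 1.
by rewrite land_odd.
Qed.
End ZL.
Lemma lowbit_pow v c : lowbit (2 ^ v * (2 * c + 1)) = (2 ^ v)%N.
Proof.
elim: v => [|v IH]; first by rewrite expn0 mul1n ZL.lowbit_odd.
by rewrite expnS -mulnA ZL.lowbit_double IH.
Qed.
Lemma decomp m : (0 < m)%N -> exists v c, m = (2 ^ v * (2 * c + 1))%N.
Proof.
elim/ltn_ind: m => m IH Hm.
case/boolP: (odd m) => Ho.
  exists 0%N, m./2; rewrite expn0 mul1n.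
  by rewrite -{1}(odd_double_half m) Ho -muln2; lia.
have Hm2 : m = (2 * m./2)%N by rewrite -{1}(odd_double_half m) (negbTE Ho) -muln2; lia.
have [v [c Hvc]] : exists v c, m./2 = (2 ^ v * (2 * c + 1))%N.
  apply: IH; lia.
exists v.+1, c; rewrite expnS -mulnA -Hvc; lia.
Qed.

Lemma expn_pow t : (2 ^ t)%N = PeanoNat.Nat.pow 2 t.
Proof. elim: t => // t IH; rewrite expnS IH /=; lia. Qed.

Definition encf (f : nat -> bool) n := (\sum_(t < n) f t * 2 ^ t)%N.

Lemma encfS f n : encf f n.+1 = (2 * encf (fun t => f t.+1) n + f 0%N)%N.
Proof.
rewrite /encf big_ord_recl /= expn0 muln1 addnC big_distrr /=; congr (_ + _)%N.
by apply: eq_bigr => i _; rewrite /bump /= add1n expnS; lia.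
Qed.

Lemma testbit_encf f n i : PeanoNat.Nat.testbit (encf f n) i = (i < n)%N && f i.
Proof.
elim: n f i => [|n IH] f i.
  by rewrite /encf big_ord0 PeanoNat.Nat.bits_0.
rewrite encfS.
have -> : (2 * encf (fun t => f t.+1) n + f 0%N)%N =
   ((2 * encf (fun t => f t.+1) n)%coq_nat + PeanoNat.Nat.b2n (f 0%N))%coq_nat.
  by case: (f 0%N) => /=; lia.
case: i => [|i]; first by rewrite PeanoNat.Nat.testbit_0_r.
by rewrite PeanoNat.Nat.testbit_succ_r IH.
Qed.

Lemma F2cases (b : 'F_2) : b = 0%R \/ b = 1%R.
Proof. case: b => [[|[|m]] Hm]; [left|right|]; try by apply/val_inj. by []. Qed.

Lemma bitv_nz (b : 'F_2) : bitv b = (b != 0%R).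
Proof. by case: (F2cases b) => ->. Qed.

Definition yb n (y : 'rV['F_2]_n) (t : nat) : bool :=
  if insub t is Some i then y ord0 i != 0%R else false.

Lemma yb_ord n (y : 'rV['F_2]_n) (i : 'I_n) : yb y i = (y ord0 i != 0%R).
Proof. by rewrite /yb valK. Qed.

Lemma enc_encf n (y : 'rV['F_2]_n) : enc y = encf (yb y) n.
Proof. by apply: eq_bigr => i _; rewrite bitv_nz yb_ord. Qed.

Lemma yb_out n (y : 'rV['F_2]_n) i : (n <= i)%N -> yb y i = false.
Proof. by move=> H; rewrite /yb insubF // ltnNge H. Qed.

Lemma testbit_enc n (y : 'rV['F_2]_n) i : PeanoNat.Nat.testbit (enc y) i = yb y i.
Proof.
rewrite enc_encf testbit_encf; case: (ltnP i n) => H //=.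
by rewrite yb_out.
Qed.

Lemma enc_add n (a b : 'rV['F_2]_n) : enc (a + b)%R = PeanoNat.Nat.lxor (enc a) (enc b).
Proof.
apply PeanoNat.Nat.bits_inj; intro i.
rewrite PeanoNat.Nat.lxor_spec !testbit_enc /yb; case: insubP => // u _ _.
by rewrite mxE; case: (F2cases (a ord0 u)) => ->; case: (F2cases (b ord0 u)) => ->.
Qed.

Lemma enc_inj n : injective (@enc n).
Proof.
move=> a b E; apply/rowP => j.
have := f_equal (fun z => PeanoNat.Nat.testbit z j) E => /=.
rewrite !testbit_enc !yb_ord.
by case: (F2cases (a ord0 j)) => ->; case: (F2cases (b ord0 j)) => ->.
Qed.

Lemma enc_delta n (t : 'I_n) : enc (delta_mx ord0 t : 'rV['F_2]_n) = (2 ^ t)%N.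
Proof.
apply PeanoNat.Nat.bits_inj; intro i.
rewrite testbit_enc expn_pow PeanoNat.Nat.pow2_bits_eqb.
case: (ltnP i n) => Hi; last first.
  rewrite yb_out //; symmetry; apply/PeanoNat.Nat.eqb_neq => E.
  by move: Hi; rewrite -E leqNgt ltn_ord.
have -> : i = val (Ordinal Hi) by [].
rewrite yb_ord mxE /=.
case: (eqVneq t (Ordinal Hi)) => [E|ne].
  by rewrite E PeanoNat.Nat.eqb_refl.
rewrite mulr0n eqxx; symmetry; apply/PeanoNat.Nat.eqb_neq => E.
by move/eqP: ne; apply; apply: val_inj.
Qed.

Lemma enc0 n : enc (0 : 'rV['F_2]_n)%R = 0%N.
Proof. by rewrite /enc big1 // => i _; rewrite mxE. Qed.

Lemma land_pow x t : (PeanoNat.Nat.land x (2 ^ t) != 0%N) = PeanoNat.Nat.testbit x t.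
Proof.
have -> : PeanoNat.Nat.land x (2 ^ t) = if PeanoNat.Nat.testbit x t then (2 ^ t)%N else 0%N.
  apply PeanoNat.Nat.bits_inj; intro i.
  rewrite PeanoNat.Nat.land_spec expn_pow PeanoNat.Nat.pow2_bits_eqb.
  case: (PeanoNat.Nat.eqb_spec t i) => [<-|ne].
    by case: (PeanoNat.Nat.testbit x t); rewrite /= ?PeanoNat.Nat.pow2_bits_true ?PeanoNat.Nat.bits_0.
  rewrite andbF; case: (PeanoNat.Nat.testbit x t); rewrite ?PeanoNat.Nat.bits_0 //; symmetry; exact: PeanoNat.Nat.pow2_bits_false.

by case: (PeanoNat.Nat.testbit x t); rewrite ?eqxx // -lt0n expn_gt0.
Qed.

Lemma lowbit_lt K m : (0 < m)%N -> (m < 2 ^ K)%N -> exists2 t, (t < K)%N & lowbit m = (2 ^ t)%N.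
Proof.
move=> H0 HK; have [v [c E]] := decomp H0.
exists v; last by rewrite E lowbit_pow.
rewrite -(ltn_exp2l _ _ (isT : (1 < 2)%N)); apply: leq_ltn_trans HK.
rewrite E; apply: leq_pmulr; lia.
Qed.

Lemma lowbit_shift K j : (0 < j)%N -> (j < 2 ^ K)%N -> lowbit (2 ^ K + j) = lowbit j.
Proof.
move=> H0 HK; have [v [c E]] := decomp H0.
have HvK : (v < K)%N.
  rewrite -(ltn_exp2l _ _ (isT : (1 < 2)%N)); apply: leq_ltn_trans HK.
  rewrite E; apply: leq_pmulr; lia.
have EK : (2 ^ K = 2 ^ v * (2 * 2 ^ (K - v.+1)))%N.
  by rewrite -expnS -expnD; congr (2 ^ _)%N; lia.
rewrite E EK -mulnDr.
have -> : (2 * 2 ^ (K - v.+1) + (2 * c + 1) = 2 * (2 ^ (K - v.+1) + c) + 1)%N by lia.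
by rewrite !lowbit_pow.
Qed.

Lemma lowbit_2pow K : lowbit (2 ^ K) = (2 ^ K)%N.
Proof. by have := lowbit_pow K 0; rewrite muln0 add0n muln1. Qed.

Lemma tbl_pow T k (dflt : T) (g : 'I_k -> T) (t : 'I_k) : tbl dflt g (2 ^ t) = g t.
Proof.
rewrite /tbl; case: pickP => [s /eqP Hs|/(_ t)]; last by rewrite eqxx.
congr g; apply: val_inj => /=.
by apply/eqP; rewrite -(eqn_exp2l _ _ (isT : (1 < 2)%N)) Hs.
Qed.

Section Main.
Variables (C : numClosedFieldType) (n k : nat) (h : 'rV['F_2]_n)
  (Vm : 'M['F_2]_(k, n)) (d : 'rV['F_2]_k) (J : 'M['F_2]_k) (gamma : C).
Local Open Scope ring_scope.

Definition E (f : nat) : 'rV['F_2]_k := tbl 0 (fun t : 'I_k => delta_mx ord0 t) f.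
Fixpoint G (m : nat) : 'rV['F_2]_k := if m is m'.+1 then G m' + E (lowbit m) else 0.

Lemma G_shift K j : (j < 2 ^ K)%N -> G (2 ^ K + j) = G (2 ^ K) + G j.
Proof.
elim: j => [|j IH] Hj; first by rewrite addn0 addr0.
by rewrite addnS /= IH ?(ltnW Hj) // -addnS lowbit_shift // addrA.
Qed.

Lemma E_pow (t : 'I_k) : E (2 ^ t) = delta_mx ord0 t.
Proof. exact: tbl_pow. Qed.

Lemma G_pow K (HK : (K < k)%N) : G (2 ^ K) = G (2 ^ K).-1 + delta_mx ord0 (Ordinal HK).
Proof.
rewrite -{1}(prednK (expn_gt0 2 K)) /= prednK ?expn_gt0 // lowbit_2pow.
by rewrite -(E_pow (Ordinal HK)).
Qed.

Lemma G_prop K : (K <= k)%N ->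
  (forall i j, (i < 2 ^ K)%N -> (j < 2 ^ K)%N -> G i = G j -> i = j) /\
  (forall i, (i < 2 ^ K)%N -> forall s : 'I_k, (K <= s)%N -> G i ord0 s = 0).
Proof.
elim: K => [|K IH] HK.
  split => [i j|i]; rewrite expn0 ?ltnS ?leqn0 => /eqP->; first by move=> /eqP->.
  by move=> s _; rewrite mxE.
have [IHi IHs] := IH (ltnW HK).
have HKk : (K < k)%N by [].
have Hpred : ((2 ^ K).-1 < 2 ^ K)%N by rewrite prednK ?expn_gt0.
have key : forall j, (j < 2 ^ K)%N -> G (2 ^ K + j) ord0 (Ordinal HKk) = 1.
  move=> j Hj; rewrite G_shift // G_pow !mxE IHs ?leqnn //= IHs ?leqnn //.
  by rewrite !eqxx add0r addr0.
have split2 : forall i, (i < 2 ^ K.+1)%N -> (2 ^ K <= i)%N ->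
    exists2 i', (i' < 2 ^ K)%N & i = (2 ^ K + i')%N.
  move=> i Hi Hi2; exists (i - 2 ^ K)%N; last by rewrite subnKC.
  by move: Hi; rewrite expnS; lia.
split.
  move=> i j Hi Hj.
  case: (ltnP i (2 ^ K)) => Hi2; case: (ltnP j (2 ^ K)) => Hj2.
  - exact: IHi.
  - have [j' Hj' ->] := split2 j Hj Hj2.
    move=> E1; move: (key j' Hj'); rewrite -E1 IHs //=.
  - have [i' Hi' ->] := split2 i Hi Hi2.
    move=> E1; move: (key i' Hi'); rewrite E1 IHs //=.
  - have [i' Hi' ->] := split2 i Hi Hi2.
    have [j' Hj' ->] := split2 j Hj Hj2.
    rewrite !G_shift // => /addrI /IHi -> //.
move=> i Hi s Hs.
case: (ltnP i (2 ^ K)) => Hi2; first by apply: IHs => //; apply: ltnW.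
have [i' Hi' ->] := split2 i Hi Hi2.
rewrite G_shift // G_pow !mxE !IHs //; try by apply: ltnW.
have -> : (s == Ordinal HKk) = false by apply/negbTE; apply/eqP => E1; move: Hs; rewrite E1 /= ltnn.
by rewrite andbF add0r addr0.
Qed.

Lemma G_inj i j : (i < 2 ^ k)%N -> (j < 2 ^ k)%N -> G i = G j -> i = j.
Proof. exact: (G_prop (leqnn k)).1. Qed.

Lemma G_surj (y : 'rV['F_2]_k) : exists2 j, (j < 2 ^ k)%N & G j = y.
Proof.
pose f := fun i : 'I_(2 ^ k) => G i.
have finj : injective f by move=> i j /G_inj H; apply: val_inj; apply: H.
have := inj_card_onto finj; rewrite card_mx card_Fp // card_ord mul1n leqnn.
by move=> /(_ isT y) /codomP [j ->]; exists j.
Qed.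

Definition bZ (b : 'F_2) : 'Z_4 := (bitv b)%:R.
Definition Qn (y : 'rV['F_2]_k) : nat :=
  (\sum_(t < k) bitv (d ord0 t) * bitv (y ord0 t) + 2 * \sum_(i < k) \sum_(j < k)
      bitv (y ord0 i) * bitv (J i j) * bitv (y ord0 j))%N.
Definition QZ (y : 'rV['F_2]_k) : 'Z_4 :=
  \sum_(t < k) bZ (d ord0 t) * bZ (y ord0 t) + 2 * \sum_(i < k) \sum_(j < k)
      bZ (y ord0 i) * bZ (J i j) * bZ (y ord0 j).

Lemma QnE y : (Qn y)%:R = QZ y.
Proof.
rewrite /Qn /QZ natrD natrM !natr_sum; congr (_ + _ * _).
  by apply: eq_bigr => i _; rewrite natrM.
apply: eq_bigr => i _; rewrite natr_sum; apply: eq_bigr => j _; by rewrite !natrM.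
Qed.

Lemma two_two (x : 'Z_4) : 2 * x + 2 * x = 0.
Proof. by rewrite -mulrDl (_ : (2 + 2 : 'Z_4) = 0) ?mul0r //; apply/val_inj. Qed.

Lemma twoN (x : 'Z_4) : - (2 * x) = 2 * x.
Proof. by apply/eqP; rewrite eq_sym -addr_eq0 two_two. Qed.

Lemma bZ0 : bZ 0 = 0. Proof. by []. Qed.
Lemma bZ1 : bZ 1 = 1. Proof. by []. Qed.

Lemma bZ2_add a b : 2 * bZ (a + b) = 2 * bZ a + 2 * bZ b.
Proof.
by case: (F2cases a) => ->; case: (F2cases b) => ->; apply/val_inj.
Qed.

Lemma bZ_mul a b : bZ (a * b) = bZ a * bZ b.
Proof.
by case: (F2cases a) => ->; case: (F2cases b) => ->; apply/val_inj.
Qed.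

Section Flip.
Variables (y : 'rV['F_2]_k) (t : 'I_k).
Let e (s : 'I_k) : 'Z_4 := (s == t)%:R.
Let Dl := 1 - 2 * bZ (y ord0 t).

Lemma bZ_flip s : bZ ((y + delta_mx ord0 t) ord0 s) = bZ (y ord0 s) + Dl * e s.
Proof.
rewrite !mxE eqxx /= /e /Dl; case: (eqVneq s t) => [->|ne].
  by case: (F2cases (y ord0 t)) => ->; apply/val_inj.
by rewrite mulr0n addr0 mulr0 addr0.
Qed.

Lemma sum_e (F : 'I_k -> 'Z_4) : \sum_s F s * e s = F t.
Proof.
rewrite (bigD1 t) //= /e eqxx mulr1 big1 ?addr0 // => s /negbTE ->.
by rewrite mulr0.
Qed.

Lemma LinE : \sum_s bZ (d ord0 s) * bZ ((y + delta_mx ord0 t) ord0 s) =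
  \sum_s bZ (d ord0 s) * bZ (y ord0 s) + bZ (d ord0 t) * Dl.
Proof.
under eq_bigr => s _ do rewrite bZ_flip mulrDr mulrA.
by rewrite big_split /= sum_e.
Qed.

Lemma QuadE : \sum_i \sum_j bZ ((y + delta_mx ord0 t) ord0 i) * bZ (J i j) *
                  bZ ((y + delta_mx ord0 t) ord0 j) =
  \sum_i \sum_j bZ (y ord0 i) * bZ (J i j) * bZ (y ord0 j)
  + Dl * \sum_j bZ (J t j) * bZ (y ord0 j)
  + Dl * \sum_i bZ (y ord0 i) * bZ (J i t)
  + Dl * Dl * bZ (J t t).
Proof.
have E1 : forall i j, bZ ((y + delta_mx ord0 t) ord0 i) * bZ (J i j) *
                  bZ ((y + delta_mx ord0 t) ord0 j) =
    bZ (y ord0 i) * bZ (J i j) * bZ (y ord0 j)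
    + (bZ (y ord0 i) * bZ (J i j) * Dl) * e j
    + (Dl * bZ (J i j) * bZ (y ord0 j) + (Dl * bZ (J i j) * Dl) * e j) * e i.
  by move=> i j; rewrite !bZ_flip; ring.
under eq_bigr => i _ do under eq_bigr => j _ do rewrite E1.
under eq_bigr => i _ do rewrite !big_split /= -mulr_suml sum_e.
rewrite !big_split /= sum_e.
rewrite big_split /= sum_e !mulr_sumr.
have -> : \sum_i bZ (y ord0 i) * bZ (J i t) * Dl = \sum_i Dl * (bZ (y ord0 i) * bZ (J i t)).
  by apply: eq_bigr => i _; ring.
have -> : \sum_i Dl * bZ (J t i) * bZ (y ord0 i) = \sum_i Dl * (bZ (J t i) * bZ (y ord0 i)).
  by apply: eq_bigr => i _; ring.
ring.
Qed.
End Flip.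

Lemma bZ2_sum (F : 'I_k -> 'F_2) : 2 * bZ (\sum_s F s) = \sum_s 2 * bZ (F s).
Proof.
elim/big_rec2: _ => [|i a b _ IH]; first by rewrite bZ0 mulr0.
by rewrite bZ2_add IH.
Qed.

Definition Pv (y : 'rV['F_2]_k) : 'rV['F_2]_k := y *m (symB J)^T.

Lemma K_lem (HJ : forall i j : 'I_k, (j < i)%N -> J i j = 0) (y : 'rV['F_2]_k) (t : 'I_k) :
  2 * (\sum_j bZ (J t j) * bZ (y ord0 j) + \sum_i bZ (y ord0 i) * bZ (J i t)) =
  2 * bZ (Pv y ord0 t).
Proof.
rewrite /Pv mxE bZ2_sum mulrDr !mulr_sumr -big_split /=.
apply: eq_bigr => s _; rewrite !mxE bZ_mul.
case: (ltngtP t s) => [lt|gt|eq].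
- by rewrite (HJ s t lt) bZ0; ring.
- by rewrite (HJ t s gt) bZ0; ring.
- have -> : s = t by apply: val_inj.
  by rewrite bZ0 !mulr0 -(two_two (bZ (J t t) * bZ (y ord0 t))); ring.
Qed.

Lemma Q_step (HJ : forall i j : 'I_k, (j < i)%N -> J i j = 0) (y : 'rV['F_2]_k) (t : 'I_k) :
  (Qn (y + delta_mx ord0 t))%:R =
  if y ord0 t == 0 then (Qn y)%:R + (bZ (d ord0 t) + 2 * bZ (J t t)) + 2 * bZ (Pv y ord0 t)
  else (Qn y)%:R - (bZ (d ord0 t) + 2 * bZ (J t t)) + 2 * bZ (Pv y ord0 t).
Proof.
rewrite !QnE /QZ LinE QuadE.
have HK := K_lem HJ y t.
set S1 := \sum_j bZ (J t j) * bZ (y ord0 j) in HK *.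
set S2 := \sum_i bZ (y ord0 i) * bZ (J i t) in HK *.
set Pt := bZ (Pv y ord0 t) in HK *.
rewrite -HK.
case: (F2cases (y ord0 t)) => ->; rewrite ?bZ0 ?bZ1 ?eqxx ?oner_eq0 /=; first by ring.
have m1 : (1 - 2 * 1 : 'Z_4) = -1 by ring.
rewrite m1 !mulN1r mulrN1 opprK !mulrDr !mulrN opprD !twoN; ring.
Qed.

Definition X j := enc (h + G j *m Vm).
Definition Phi y : C := gamma * 'i ^+ val ((Qn y)%:R : 'Z_4).

Definition Inv m (s : state C) :=
  st_y s = enc (G m) /\ st_x s = X m /\ st_p s = enc (Pv (G m)) /\ st_q s = (Qn (G m))%:R /\
      (forall j, (j <= m)%N -> st_psi s (X j) = Phi (G j)) /\
      (forall z, (forall j, (j <= m)%N -> z != X j) -> st_psi s z = 0).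

Lemma X_inj (Hrf : row_free Vm) i j : (i < 2 ^ k)%N -> (j < 2 ^ k)%N -> X i = X j -> i = j.
Proof.
by move=> Hi Hj /enc_inj /addrI /(row_free_inj Hrf) /G_inj; apply.
Qed.

Lemma Qn0 : (Qn 0)%:R = 0 :> 'Z_4.
Proof.
rewrite QnE /QZ big1 ?add0r; last by move=> i _; rewrite mxE bZ0 mulr0.
rewrite big1 ?mulr0 // => i _; rewrite big1 // => j _; by rewrite !mxE bZ0 !mul0r.
Qed.

Lemma inv0 : Inv 0 (init h gamma).
Proof.
have X0 : X 0 = enc h by rewrite /X /= mul0mx addr0.
rewrite /Inv /=; split; [|split; [by []|split; [|split; [|split]]]].
- by rewrite enc0.
- by rewrite /Pv mul0mx enc0.
- by rewrite Qn0.
- move=> j; rewrite leqn0 => /eqP ->; rewrite /upd X0 eqxx /Phi /= Qn0 /= expr0 mulr1 //.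
- move=> z Hz; rewrite /upd; have := Hz 0%N (leqnn 0); rewrite X0 => /negbTE -> //.
Qed.

Lemma inv_step (HJ : forall i j : 'I_k, (j < i)%N -> J i j = 0) (Hrf : row_free Vm)
   m s : (m.+1 < 2 ^ k)%N -> Inv m s -> Inv m.+1 (step Vm d J gamma s m.+1).
Proof.
move=> Hm [Hy [Hx [Hp [Hq [Hpsi Hz]]]]].
have [t Ht Hlb] := lowbit_lt (ltn0Sn m) Hm.
pose T := Ordinal Ht.
have ET : E (2 ^ t) = delta_mx ord0 T := E_pow T.
have HG : G m.+1 = G m + delta_mx ord0 T by rewrite /= Hlb ET.
have Lb : forall y : 'rV['F_2]_k, (Nat.land (enc y) (2 ^ t) != 0%N) = (y ord0 T != 0).
  by move=> y; rewrite land_pow testbit_enc (yb_ord y T).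
have Fy : Nat.lxor (st_y s) (2 ^ t) = enc (G m.+1).
  by rewrite Hy HG enc_add (enc_delta T).
have Fx : Nat.lxor (st_x s) (tabV Vm (2 ^ t)) = X m.+1.
  rewrite Hx /X HG /tabV (tbl_pow 0%N (fun t0 : 'I_k => enc (row t0 Vm)) T).
  by rewrite mulmxDl -rowE addrA [RHS]enc_add.
have Fp : Nat.lxor (st_p s) (tabC J (2 ^ t)) = enc (Pv (G m.+1)).
  rewrite Hp /Pv HG /tabC (tbl_pow 0%N (fun t0 : 'I_k => enc (\row_i (symB J) i t0)) T).
  rewrite mulmxDl -rowE -enc_add; congr (enc (_ + _)).
  by apply/rowP => i; rewrite !mxE.
have Ly : (Nat.land (st_y s) (2 ^ t) == 0%N) = (G m ord0 T == 0).
  by apply: negb_inj; rewrite Hy Lb.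
have Ind : ((2 * (Nat.land (st_p s) (2 ^ t) != 0%N))%N%:R : 'Z_4) = 2 * bZ (Pv (G m) ord0 T).
  by rewrite Hp Lb natrM /bZ bitv_nz.
have TA : tabA d J (2 ^ t) = bZ (d ord0 T) + 2 * bZ (J T T).
  rewrite /tabA (tbl_pow 0 (fun t0 : 'I_k => ((bitv (d ord0 t0) + 2 * bitv (J t0 t0))%N)%:R) T).
  by rewrite natrD natrM.
have Fq : (if Nat.land (st_y s) (2 ^ t) == 0%N
           then st_q s + tabA d J (2 ^ t) + ((2 * (Nat.land (st_p s) (2 ^ t) != 0%N))%N%:R : 'Z_4)
           else st_q s - tabA d J (2 ^ t) + ((2 * (Nat.land (st_p s) (2 ^ t) != 0%N))%N%:R : 'Z_4))
          = (Qn (G m.+1))%:R.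
  by rewrite Ly Ind TA Hq HG (Q_step HJ (G m) T).
rewrite /Inv /step /= Hlb Fy Fx Fp Fq ET -HG.
split; first by [].
split; first by [].
split; first by [].
split; first by [].
split.
  move=> j; rewrite leq_eqVlt => /orP [/eqP ->|Hj].
    by rewrite /upd eqxx.
  rewrite /upd; case: eqP => [E1|_]; last exact: Hpsi.
  have := X_inj Hrf (ltn_trans Hj Hm) Hm E1; move=> E2; move: Hj; rewrite E2 ltnn //.
move=> z Hz'; rewrite /upd; case: eqP => [E1|_].
  by move: (Hz' m.+1 (leqnn _)); rewrite E1 eqxx.
by apply: Hz => j Hj; apply: Hz'; apply: (leq_trans Hj).
Qed.

Lemma inv_all (HJ : forall i j : 'I_k, (j < i)%N -> J i j = 0) (Hrf : row_free Vm) m :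
  (m < 2 ^ k)%N -> Inv m (foldl (step Vm d J gamma) (init h gamma) (iota 1 m)).
Proof.
elim: m => [|m IH] Hm; first exact: inv0.
rewrite -addn1 iotaD foldl_cat /= add1n addn1.
by apply: inv_step => //; apply: IH; apply: ltnW.
Qed.

Lemma i_pow_mod4 N : 'i ^+ (N %% 4) = 'i ^+ N :> C.
Proof.
rewrite {2}(divn_eq N 4) exprD mulnC exprM.
have -> : 'i ^+ 4 = 1 :> C by rewrite (_ : 4 = 2 * 2)%N // exprM sqrCi sqrrN expr1n.
by rewrite expr1n mul1r.
Qed.

Lemma main_result (HJ : forall i j : 'I_k, (j < i)%N -> J i j = 0) (Hrf : row_free Vm) :
  let psi := procedure h Vm d J gamma in
  (forall y : 'rV['F_2]_k,
     psi (enc (h + \sum_(t < k) y ord0 t *: row t Vm)) =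
     gamma * 'i ^+ (\sum_(t < k) bitv (d ord0 t) * bitv (y ord0 t))%N
           * (-1) ^+ (\sum_(i < k) \sum_(j < k)
                        bitv (y ord0 i) * bitv (J i j) * bitv (y ord0 j))%N) /\
  (forall x : 'rV['F_2]_n,
     ~ (exists y : 'rV['F_2]_k, x = h + \sum_(t < k) y ord0 t *: row t Vm) ->
     psi (enc x) = 0).
Proof.
move=> psi.
have Hm : (2 ^ k - 1 < 2 ^ k)%N by have := expn_gt0 2 k; lia.
have [_ [_ [_ [_ [Hpsi Hz]]]]] := inv_all HJ Hrf Hm.
split.
  move=> y; have [j Hj Gj] := G_surj y.
  rewrite -mulmx_sum_row -Gj /psi /procedure (Hpsi j); last by lia.
  rewrite /Phi (_ : \val ((Qn (G j))%:R : 'Z_4) = Qn (G j) %% 4)%N; last exact: val_Zp_nat.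
  rewrite i_pow_mod4 /Qn exprD exprM sqrCi mulrA //.
move=> x Hx; rewrite /psi /procedure Hz // => j Hj.
apply/eqP => E1; apply: Hx; exists (G j).
by apply: enc_inj; rewrite E1 /X mulmx_sum_row.
Qed.
End Main.

Local Open Scope ring_scope.

Theorem theorem1 (C : numClosedFieldType) (n k : nat) (h : 'rV['F_2]_n)
  (Vm : 'M['F_2]_(k, n)) (d : 'rV['F_2]_k) (J : 'M['F_2]_k) (gamma : C) :
  (k <= n)%N ->
  row_free Vm ->
  (forall i j : 'I_k, (j < i)%N -> J i j = 0) ->
  gamma != 0 ->
  let psi := procedure h Vm d J gamma in
  (forall y : 'rV['F_2]_k,
     psi (enc (h + \sum_(t < k) y ord0 t *: row t Vm)) =
     gamma * 'i ^+ (\sum_(t < k) bitv (d ord0 t) * bitv (y ord0 t))%N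
           * (-1) ^+ (\sum_(i < k) \sum_(j < k)
                        bitv (y ord0 i) * bitv (J i j) * bitv (y ord0 j))%N) /\
  (forall x : 'rV['F_2]_n,
     ~ (exists y : 'rV['F_2]_k, x = h + \sum_(t < k) y ord0 t *: row t Vm) ->
     psi (enc x) = 0).
Proof.
move=> _ Hrf HJ _; exact: main_result.
Qed.
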